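(* Let $S,T$ be sets of vectors in $\mathbb{R}^d$ with $|S|=|T|=r$, $|S\triangle T|\leq 2d$, and $V_SV_S^\top$ invertible, and let $X=T\setminus S$, $Y=S\setminus T$. Then \[\det(V_TV_T^\top)\geq\det(V_SV_S^\top)\cdot\det\big(V_X^\top(V_SV_S^\top)^{-1}V_Y\big)^2.\]
   Context: For a set $Z$ of vectors in $\mathbb{R}^d$, $V_Z$ denotes the $d\times|Z|$ matrix whose columns are the vectors of $Z$. *)

(* Defs.v *)
From HB Require Import structures.
From mathcomp Require Import all_boot all_order all_algebra.
From mathcomp Require Import finmap.
From mathcomp Require Import reals.
Set Implicit Arguments. Unset Strict Implicit. Unset Printing Implicit Defensive.
Import Order.TTheory GRing.Theory Num.Theory.
Local Open Scope ring_scope.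
Local Open Scope fset_scope.

(* V_Z : the d x |Z| matrix whose columns are the vectors of the finite set Z
   (in the enumeration order of Z; the statement is insensitive to this order). *)
Definition Vmat (R : realType) (d : nat) (Z : {fset 'cV[R]_d}) : 'M[R]_(d, #|` Z|) :=
  \matrix_(i < d, j < #|` Z|) (nth 0 (enum_fset Z) j) i 0.

(* determinant of a matrix whose dimensions are (propositionally) equal;
   it is 0 when the matrix is not square. *)
Definition sqdet (R : realType) (m n : nat) (A : 'M[R]_(m, n)) : R :=
  match m =P n with
  | ReflectT e => \det (castmx (erefl m, esym e) A)
  | ReflectF _ => 0
  end.

(* Main.v *)
Require Import Defs.
From HB Require Import structures.
From mathcomp Require Import all_boot all_order all_algebra.
From mathcomp Require Import finmap.
From mathcomp Require Import reals.
Import Order.TTheory GRing.Theory Num.Theory.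
Local Open Scope ring_scope.

Definition Gs (R : realType) (d : nat) (s : seq 'cV[R]_d) : 'M[R]_d :=
  \sum_(v <- s) v *m v^T.

Arguments Gs {R d} s.
Definition psd (R : realType) (d : nat) (G : 'M[R]_d) := exists s, G = Gs s.
Arguments psd {R d} G.

Lemma Gs_cat {R : realType} {d : nat} (s t : seq 'cV[R]_d) :
  Gs (s ++ t) = Gs s + Gs t.
Proof. by rewrite /Gs big_cat. Qed.

Lemma psdD {R : realType} {d : nat} (G H : 'M[R]_d) : psd G -> psd H -> psd (G + H).
Proof. by move=> [s ->] [t ->]; exists (s ++ t); rewrite Gs_cat. Qed.

Lemma psd_tr {R : realType} {d : nat} {G : 'M[R]_d} : psd G -> G^T = G.
Proof.
move=> [s ->]; rewrite /Gs.
apply/matrixP => i j; rewrite mxE !summxE; apply: eq_bigr => v _.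
by rewrite !mxE !big_ord1 !mxE mulrC.
Qed.

Lemma psd_congr {R : realType} {d m : nat} (N : 'M[R]_(m, d)) (G : 'M[R]_d) :
  psd G -> psd (N *m G *m N^T).
Proof.
move=> [s ->]; exists (map (mulmx N) s); rewrite /Gs big_map.
rewrite mulmx_sumr mulmx_suml; apply: eq_bigr => v _.
by rewrite trmx_mul !mulmxA.
Qed.

Lemma psd_MMt {R : realType} {d n : nat} (N : 'M[R]_(d, n)) : psd (N *m N^T).
Proof.
exists [seq col j N | j <- enum 'I_n]; rewrite /Gs big_map big_enum /=.
apply/matrixP => i j; rewrite !mxE summxE; apply: eq_bigr => k _.
by rewrite !mxE big_ord1 !mxE.
Qed.

Lemma psd1 (R : realType) (d : nat) : psd (1%:M : 'M[R]_d).
Proof. by have := psd_MMt (1%:M : 'M[R]_d); rewrite trmx1 mulmx1. Qed.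

Lemma psd_inv {R : realType} {d : nat} (G : 'M[R]_d) : psd G -> psd (invmx G).
Proof.
move=> pG; case: (boolP (G \in unitmx)) => uG; last by rewrite (invmx_out uG).
have -> : invmx G = invmx G *m G *m (invmx G)^T.
  by rewrite trmx_inv (psd_tr pG) mulVmx // mul1mx.
exact: psd_congr.
Qed.

Lemma quad_ge0 {R : realType} {d : nat} (G : 'M[R]_d) (w : 'cV[R]_d) :
  psd G -> 0 <= (w^T *m G *m w) 0 0.
Proof.
move=> [s ->]; rewrite /Gs mulmx_sumr mulmx_suml summxE.
apply: sumr_ge0 => v _.
rewrite !mulmxA -(mulmxA _ v^T) mxE big_ord1.
have -> : (v^T *m w) = (w^T *m v)^T by rewrite trmx_mul trmxK.
set a := w^T *m v; rewrite [a^T _ _]mxE -expr2; exact: sqr_ge0.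
Qed.

Lemma sylvester {R : realType} {m n : nat} (U : 'M[R]_(m, n)) (V : 'M[R]_(n, m)) :
  \det (1%:M + U *m V) = \det (1%:M + V *m U).
Proof.
have e1 : block_mx 1%:M (-U) V 1%:M =
   block_mx 1%:M 0 V 1%:M *m block_mx 1%:M (-U) 0 (1%:M + V *m U).
  rewrite mulmx_block; congr block_mx; rewrite ?mul1mx ?mul0mx ?mulmx1 ?mulmx0 ?addr0 ?add0r ?mulmxN //.
  by rewrite addrCA addNr addr0.
have e2 : block_mx 1%:M (-U) V 1%:M =
   block_mx (1%:M + U *m V) (-U) 0 1%:M *m block_mx 1%:M 0 V 1%:M.
  rewrite mulmx_block; congr block_mx; rewrite ?mul1mx ?mul0mx ?mulmx1 ?mulmx0 ?addr0 ?add0r ?mulNmx //.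
  by rewrite addrK.
have := e1; rewrite e2 => /(congr1 determinant).
by rewrite !det_mulmx !det_lblock !det_ublock !det_scalar !expr1n !mul1r !mulr1 => ->.
Qed.

Lemma rank1 {R : realType} {d : nat} (G : 'M[R]_d) (v : 'cV[R]_d) :
  G \in unitmx ->
  \det (G + v *m v^T) = \det G * (1 + (v^T *m invmx G *m v) 0 0).
Proof.
move=> uG.
have -> : G + v *m v^T = G *m (1%:M + (invmx G *m v) *m v^T).
  by rewrite mulmxDr mulmx1 !mulmxA mulmxV // mul1mx.
rewrite det_mulmx sylvester det_mx11 mxE mxE eqxx mulr1n mulmxA.
done.
Qed.

Lemma schur {R : realType} {n1 n2 : nat} (Aul : 'M[R]_n1) (Aur : 'M[R]_(n1, n2))
  (Adl : 'M[R]_(n2, n1)) (Adr : 'M[R]_n2) : Aul \in unitmx ->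
  \det (block_mx Aul Aur Adl Adr) = \det Aul * \det (Adr - Adl *m invmx Aul *m Aur).
Proof.
move=> u.
have -> : block_mx Aul Aur Adl Adr = block_mx 1%:M 0 (Adl *m invmx Aul) 1%:M *m
   block_mx Aul Aur 0 (Adr - Adl *m invmx Aul *m Aur).
  rewrite mulmx_block; congr block_mx; rewrite ?mul1mx ?mul0mx ?mulmx1 ?mulmx0 ?addr0 ?add0r //.
    by rewrite -mulmxA mulVmx // mulmx1.
  by rewrite addrCA subrr addr0.
by rewrite det_mulmx det_lblock det_ublock !det_scalar !expr1n !mul1r.
Qed.

Lemma psd_scalar {R : realType} {d : nat} (x : R) : 0 <= x -> psd (x%:M : 'M[R]_d).
Proof.
move=> x0; have := psd_MMt ((Num.sqrt x)%:M : 'M[R]_d).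
by rewrite tr_scalar_mx -scalar_mxM -expr2 sqr_sqrtr.
Qed.

Lemma pd_pos {R : realType} {d : nat} (x : R) (s : seq 'cV[R]_d) :
  0 < x -> 0 < \det (x%:M + Gs s).
Proof.
move=> x0; elim: s => [|v s IH].
  by rewrite /Gs big_nil addr0 det_scalar exprn_gt0.
have -> : x%:M + Gs (v :: s) = (x%:M + Gs s) + v *m v^T.
  by rewrite /Gs big_cons addrCA addrC.
have u : (x%:M + Gs s) \in unitmx by rewrite unitmxE unitfE gt_eqF.
rewrite rank1 //; apply: mulr_gt0 => //.
have : 0 <= (v^T *m invmx (x%:M + Gs s) *m v) 0 0.
  apply: quad_ge0; apply: psd_inv; apply: psdD; last by exists s.
  by apply: psd_scalar; rewrite ltW.
by move=> h; apply: (lt_le_trans ltr01); rewrite lerDl.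
Qed.

Lemma psd_det_ge0 {R : realType} {d : nat} (G : 'M[R]_d) : psd G -> 0 <= \det G.
Proof.
move=> [s ->].
pose p : {poly R} := \det ('X%:M + map_mx polyC (Gs s)).
have hp : forall x, p.[x] = \det (x%:M + Gs s).
  move=> x; rewrite -horner_evalE /p -det_map_mx; congr determinant.
  apply/matrixP => i j; rewrite !mxE rmorphD rmorphMn /= !horner_evalE hornerX hornerC.
  done.
rewrite leNgt; apply/negP => hneg.
have z0 : (0 : R)%:M = 0 :> 'M[R]_d by apply/matrixP => i j; rewrite !mxE mul0rn.
have h0 : p.[0] = \det (Gs s) by rewrite hp z0 add0r.
have hab : p.[0] <= 0 <= p.[1].
  by rewrite h0 ltW //= hp; apply/ltW/pd_pos.
have [x /andP [x0 x1] rx] := @poly_ivt R p 0 1 ler01 hab.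
move: rx; rewrite /root; case: (ltrgt0P x) x0 => //.
  by move=> xp _; rewrite hp gt_eqF // pd_pos.
by move=> -> _; rewrite h0 lt_eqF.
Qed.

Lemma psd_mono {R : realType} {d : nat} (G H : 'M[R]_d) :
  psd G -> psd H -> \det H <= \det (G + H).
Proof.
move=> [s ->] pH; elim: s => [|v s IH].
  by rewrite /Gs big_nil add0r.
have -> : Gs (v :: s) + H = (Gs s + H) + v *m v^T.
  by rewrite /Gs big_cons -addrA addrC.
have pK : psd (Gs s + H) by apply: psdD => //; exists s.
case: (boolP ((Gs s + H) \in unitmx)) => u.
  rewrite rank1 //; apply: (le_trans IH).
  rewrite ler_peMr ?psd_det_ge0 // lerDl.
  exact/quad_ge0/psd_inv.
apply: (le_trans IH); move: u; rewrite unitmxE unitfE negbK => /eqP ->.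
apply: psd_det_ge0; apply: psdD => //; exact: psd_MMt.
Qed.

Lemma trD {R : realType} {m n : nat} (A B : 'M[R]_(m, n)) : (A + B)^T = A^T + B^T.
Proof. by apply/matrixP => i j; rewrite !mxE. Qed.
Lemma trB {R : realType} {m n : nat} (A B : 'M[R]_(m, n)) : (A - B)^T = A^T - B^T.
Proof. by apply/matrixP => i j; rewrite !mxE. Qed.

Lemma zid (V : zmodType) (o a b : V) : a - b + (o - a - a + b) = o - a.
Proof. by rewrite addrC -!addrA; congr (_ + _); rewrite [b + _]addrCA subrr addr0 addNr addr0. Qed.

Lemma psd_1R {R : realType} {d k : nat} (c : seq 'cV[R]_d) (Y : 'M[R]_(d, k)) :
  (Gs c + Y *m Y^T) \in unitmx ->
  psd (1%:M - Y^T *m invmx (Gs c + Y *m Y^T) *m Y).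
Proof.
set A := Gs c + Y *m Y^T => uA.
have pA : psd A by apply: psdD; [exists c | exact: psd_MMt].
set Ai := invmx A; set M := Y^T *m Ai.
have sAi : Ai^T = Ai by rewrite /Ai trmx_inv (psd_tr pA).
have MT : M^T = Ai *m Y by rewrite /M trmx_mul sAi trmxK.
set R' := M *m Y.
have RT : R'^T = R' by rewrite /R' trmx_mul MT /M mulmxA.
have h1 : M *m Gs c *m M^T = R' - R' *m R'.
  have -> : Gs c = A - Y *m Y^T by rewrite /A addrK.
  rewrite mulmxBr mulmxBl.
  have -> : M *m A = Y^T by rewrite /M -mulmxA mulVmx // mulmx1.
  congr (_ - _); first by rewrite MT mulmxA.
  by rewrite mulmxA -mulmxA MT [Y^T *m _]mulmxA.
have h2 : (1%:M - R') *m (1%:M - R')^T = 1%:M - R' - R' + R' *m R'.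
  rewrite trB trmx1 RT mulmxBr !mulmxBl !mul1mx !mulmx1.
  by rewrite opprB addrA addrAC.
have -> : 1%:M - R' = M *m Gs c *m M^T + (1%:M - R') *m (1%:M - R')^T.
  rewrite h1 h2.
  by rewrite zid.
apply: psdD; [apply: psd_congr; by exists c | exact: psd_MMt].
Qed.

Lemma key {R : realType} {d k : nat} (c : seq 'cV[R]_d) (X Y : 'M[R]_(d, k)) :
  (Gs c + Y *m Y^T) \in unitmx ->
  \det (Gs c + Y *m Y^T) * \det (X^T *m invmx (Gs c + Y *m Y^T) *m Y) ^+ 2
  <= \det (Gs c + X *m X^T).
Proof.
set A := Gs c + Y *m Y^T => uA.
have p1R := psd_1R c Y uA.
have pA : psd A by apply: psdD; [exists c | exact: psd_MMt].
set Ai := invmx A.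
have pAi : psd Ai := psd_inv _ pA.
have sAi : Ai^T = Ai by rewrite /Ai trmx_inv (psd_tr pA).
set P := X^T *m Ai *m X; set Q := X^T *m Ai *m Y; set R' := Y^T *m Ai *m Y.
have QT : Q^T = Y^T *m Ai *m X by rewrite /Q !trmx_mul sAi trmxK mulmxA.
have e1 : Gs c + X *m X^T = A *m (1%:M + (Ai *m row_mx X Y) *m col_mx X^T (- Y^T)).
  rewrite mulmxDr mulmx1 !mulmxA /Ai mulmxV // mul1mx mul_row_col mulmxN /A.
  by rewrite addrA addrAC addrK.
have e2 : col_mx X^T (- Y^T) *m (Ai *m row_mx X Y) =
    block_mx P Q (- Q^T) (- R').
  by rewrite mul_mx_row mul_col_row !mulmxA !mulNmx QT.
rewrite e1 det_mulmx sylvester e2 (scalar_mx_block k k) add_block_mx.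
have pP : psd P by rewrite /P -[X in _ *m X]trmxK; exact: psd_congr.
have pP1 : psd (1%:M + P) by apply: psdD => //; exact: psd1.
have dP1 : 1 <= \det (1%:M + P).
  by have := psd_mono _ _ pP (psd1 R k); rewrite det_scalar expr1n addrC.
have dP1p : 0 < \det (1%:M + P) by apply: lt_le_trans dP1; exact: ltr01.
have uP1 : (1%:M + P) \in unitmx by rewrite unitmxE unitfE gt_eqF.
rewrite schur // sub0r add0r !mulNmx opprK.
set W := invmx (1%:M + P).
have pH : psd (Q^T *m W *m Q).
  by rewrite -[X in _ *m X]trmxK; apply: psd_congr; exact: psd_inv.
have hm := psd_mono _ _ p1R pH.
have dH : \det (Q^T *m W *m Q) = \det Q ^+ 2 / \det (1%:M + P).
  by rewrite !det_mulmx det_tr det_inv mulrAC expr2 mulrC.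
apply: ler_wpM2l; first exact: psd_det_ge0.
apply: (@le_trans _ _ (\det (1%:M + P) * \det (Q^T *m W *m Q))).
  by rewrite dH mulrC divfK // gt_eqF.
by apply: ler_wpM2l => //; apply: ltW.
Qed.

Local Open Scope fset_scope.

Lemma sqdet_sq {R : realType} {m : nat} (M : 'M[R]_m) : sqdet M = \det M.
Proof.
rewrite /sqdet; case: (m =P m) => [e|ne]; last by case: ne.
by rewrite (eq_irrelevance e (erefl m)) castmx_id.
Qed.

Lemma VVt {R : realType} {d : nat} (Z : {fset 'cV[R]_d}) :
  Vmat Z *m (Vmat Z)^T = Gs (enum_fset Z).
Proof.
apply/matrixP => i j; rewrite !mxE /Gs summxE (big_nth 0) big_mkord.
by apply: eq_bigr => l _; rewrite !mxE big_ord1 !mxE.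
Qed.

Lemma Gs_split {R : realType} {d : nat} (A B : {fset 'cV[R]_d}) :
  Gs (enum_fset A) = (Gs (enum_fset (A `&` B)) + Gs (enum_fset (A `\` B)))%R.
Proof.
rewrite -Gs_cat /Gs; apply: perm_big; apply: uniq_perm.
- exact: fset_uniq.
- rewrite cat_uniq !fset_uniq /= andbT; apply/hasPn => x.
  by rewrite in_fsetD in_fsetI => /andP [/negbTE -> _]; rewrite andbF.
- by move=> x; rewrite mem_cat in_fsetI in_fsetD; case: (x \in B); case: (x \in A).
Qed.

Theorem mainTheorem7 (R : realType) (d r : nat) (S T : {fset 'cV[R]_d}) :
  #|` S| = r -> #|` T| = r ->
  (#|` (S `\` T) `|` (T `\` S)| <= 2 * d)%N ->
  (Vmat S *m (Vmat S)^T) \in unitmx ->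
  \det (Vmat S *m (Vmat S)^T) *
    sqdet ((Vmat (T `\` S))^T *m invmx (Vmat S *m (Vmat S)^T) *m Vmat (S `\` T)) ^+ 2
  <= \det (Vmat T *m (Vmat T)^T).
Proof.
move=> hS hT _.
have hk : #|` T `\` S| = #|` S `\` T|.
  have h1 := cardfsID T S; have h2 := cardfsID S T.
  rewrite fsetIC hT in h2; rewrite hS -h2 in h1.
  by move/eqP: h1; rewrite eqn_add2l => /eqP.
rewrite !VVt (Gs_split S T) (Gs_split T S) fsetIC -!VVt.
move: (Vmat (S `\` T)) (Vmat (T `\` S)); rewrite hk => Y X uA.
rewrite sqdet_sq; rewrite VVt in uA *; exact: key.
Qed.
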